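(* Let $G$ be a finite group, and let $a_1,a_2,a_3,a_4$ be independent uniformly random elements of $G$. Then each of the probabilities \[ Pr(a_1a_2a_3a_4=a_3a_2a_4a_1),\quad Pr(a_1a_2a_3a_4=a_4a_2a_1a_3), \] \[ Pr(a_1a_2a_3a_4=a_2a_4a_3a_1),\quad Pr(a_1a_2a_3a_4=a_4a_1a_3a_2) \] equals $Pr^4(G)$, the probability that $a_1a_2a_3a_4=a_4a_3a_2a_1$. *)

(* Defs.v *)
From mathcomp Require Import all_boot all_algebra all_fingroup.
Set Implicit Arguments. Unset Strict Implicit. Unset Printing Implicit Defensive.

Definition prob4 (gT : finGroupType) (P : gT -> gT -> gT -> gT -> bool) : rat :=
  (#|[set x : gT * gT * gT * gT | P x.1.1.1 x.1.1.2 x.1.2 x.2]|%:R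
    / (#|gT| ^ 4)%:R)%R.

Definition Pr4 (gT : finGroupType) : rat :=
  prob4 (fun a1 a2 a3 a4 : gT => (a1 * a2 * a3 * a4 == a4 * a3 * a2 * a1)%g).

(* Main.v *)
Require Import Defs.
From mathcomp Require Import all_boot all_algebra all_fingroup.
Set Implicit Arguments. Unset Strict Implicit. Unset Printing Implicit Defensive.

Section Aux.
Variable gT : finGroupType.
Local Open Scope group_scope.
Implicit Types x y z : gT.

Lemma eqLg x y z : (z * x == z * y) = (x == y).
Proof. by apply/eqP/eqP => [H|->//]; rewrite -(mulKg z x) H mulKg. Qed.
Lemma eqRg x y z : (x * z == y * z) = (x == y).
Proof. by apply/eqP/eqP => [H|->//]; rewrite -(mulgK z x) H mulgK. Qed.
Lemma eqVg x y : (x^-1 == y^-1) = (x == y).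
Proof. by apply/eqP/eqP => [H|->//]; rewrite -(invgK x) H invgK. Qed.

Lemma prob4_bij (P Q : gT -> gT -> gT -> gT -> bool)
  (f g : gT * gT * gT * gT -> gT * gT * gT * gT) :
  cancel f g -> cancel g f ->
  (forall x : gT * gT * gT * gT, Q (f x).1.1.1 (f x).1.1.2 (f x).1.2 (f x).2 = P x.1.1.1 x.1.1.2 x.1.2 x.2) ->
  prob4 P = prob4 Q.
Proof.
move=> fK gK H; rewrite /prob4; congr (_ %:R / _)%R.
have -> : [set x : gT * gT * gT * gT | Q x.1.1.1 x.1.1.2 x.1.2 x.2] =
   f @: [set x : gT * gT * gT * gT | P x.1.1.1 x.1.1.2 x.1.2 x.2].
  apply/setP => y; rewrite inE; apply/idP/imsetP => [Hy|[x]].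
    by exists (g y); rewrite ?gK // inE -H gK.
  by rewrite inE -H => Hx ->.
by rewrite card_imset //; apply: can_inj fK.
Qed.
Lemma e1 (a b c d : gT) : (a * d^-1 * c^-1 * b^-1 * d^-1 == d^-1 * b^-1 * c^-1 * (a * d^-1)) = (a * b * c * d == c * b * d * a).
Proof.
rewrite -eqVg !invMg !invgK -!mulgA eqLg.
rewrite -(eqLg _ _ a) -(eqRg _ _ a) !mulgA mulgKV mulgV mul1g.
by [].
Qed.
Lemma e2 (a b c d : gT) : (c * d * b * a * c == c * a * b * (c * d)) = (a * b * c * d == d * b * a * c).
Proof. by rewrite -!mulgA eqLg eq_sym. Qed.
Lemma e3 (a b c d : gT) : (a * b * b^-1 * d^-1 * c^-1 == c^-1 * d^-1 * b^-1 * (a * b)) = (a * b * c * d == b * d * c * a).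
Proof.
rewrite mulgK -eqVg !invMg !invgK -[X in X = _](eqLg _ _ (a * b)) -[X in X = _](eqRg _ _ a) !mulgA mulgKV mulgK mulgV mul1g.
by [].
Qed.
Lemma e4 (a b c d : gT) : (a^-1 * d * a * c * b == b * c * a * (a^-1 * d)) = (a * b * c * d == d * a * c * b).
Proof.
rewrite !mulgA mulgK -[X in X = _](eqLg _ _ a) !mulgA mulgV mul1g eq_sym.
by [].
Qed.
End Aux.

Theorem mainTheorem8 (gT : finGroupType) :
  [/\ prob4 (fun a1 a2 a3 a4 : gT => (a1 * a2 * a3 * a4 == a3 * a2 * a4 * a1)%g) = Pr4 gT,
      prob4 (fun a1 a2 a3 a4 : gT => (a1 * a2 * a3 * a4 == a4 * a2 * a1 * a3)%g) = Pr4 gT,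
      prob4 (fun a1 a2 a3 a4 : gT => (a1 * a2 * a3 * a4 == a2 * a4 * a3 * a1)%g) = Pr4 gT
    & prob4 (fun a1 a2 a3 a4 : gT => (a1 * a2 * a3 * a4 == a4 * a1 * a3 * a2)%g) = Pr4 gT].
Proof.
split.
- apply: (@prob4_bij _ _ _
    (fun x => let: (a, b, c, d) := x in (a * d^-1, c^-1, b^-1, d^-1))%g
    (fun x => let: (p, q, r, s) := x in (p * s^-1, r^-1, q^-1, s^-1))%g).
  + by case=> [[[a b] c] d] /=; rewrite !invgK mulgKV.
  + by case=> [[[a b] c] d] /=; rewrite !invgK mulgKV.
  by case=> [[[a b] c] d] /=; rewrite e1.
- apply: (@prob4_bij _ _ _
    (fun x => let: (a, b, c, d) := x in (c * d, b, a, c))%g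
    (fun x => let: (p, q, r, s) := x in (r, q, s, s^-1 * p))%g).
  + by case=> [[[a b] c] d] /=; rewrite mulKg.
  + by case=> [[[a b] c] d] /=; rewrite mulKVg.
  by case=> [[[a b] c] d] /=; rewrite e2.
- apply: (@prob4_bij _ _ _
    (fun x => let: (a, b, c, d) := x in (a * b, b^-1, d^-1, c^-1))%g
    (fun x => let: (p, q, r, s) := x in (p * q, q^-1, s^-1, r^-1))%g).
  + by case=> [[[a b] c] d] /=; rewrite !invgK mulgK.
  + by case=> [[[a b] c] d] /=; rewrite !invgK mulgK.
  by case=> [[[a b] c] d] /=; rewrite e3.
- apply: (@prob4_bij _ _ _
    (fun x => let: (a, b, c, d) := x in (a^-1 * d, a, c, b))%g
    (fun x => let: (p, q, r, s) := x in (q, s, r, q * p))%g).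
  + by case=> [[[a b] c] d] /=; rewrite mulKVg.
  + by case=> [[[a b] c] d] /=; rewrite mulKg.
  by case=> [[[a b] c] d] /=; rewrite e4.
Qed.
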